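(* For every rpoNFA $\mathcal{A}$, the language $L(\mathcal{A})$ is DRE definable, i.e., there exists a deterministic regular expression $r$ with $L(r)=L(\mathcal{A})$.
   Context: A poNFA is an NFA whose reachability relation ($p\le q$ iff $q\in p\cdot w$ for some word $w$) is a partial order; an rpoNFA is a poNFA such that for every state $q$ and letter $a$, $q\in q\cdot a$ implies $q\cdot a=\{q\}$. Regular expressions over $\Sigma$ are built from $\emptyset$, $\varepsilon$, letters $a\in\Sigma$ by concatenation, union $+$ and Kleene star, with the usual semantics. For a regular expression $r$, let $\overline{r}$ be obtained by replacing the $i$-th occurrence of each letter $a$ in $r$ by a fresh marked letter $a_i$. The expression $r$ is deterministic (one-unambiguous) if there are no words $wa_iv$ and $wa_jv'$ in $L(\overline{r})$ with $i\neq j$. A regular language is DRE definable if some deterministic regular expression defines it. *)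

(* Defs.v *)
From Stdlib Require List.
From mathcomp Require Import all_boot.
Set Implicit Arguments. Unset Strict Implicit. Unset Printing Implicit Defensive.

Record nfa (Sigma Q : finType) := NFA {
  nfa_init  : {set Q};
  nfa_final : {set Q};
  nfa_delta : Q -> Sigma -> {set Q}
}.

Fixpoint delta_star (Sigma Q : finType) (A : nfa Sigma Q) (p : Q) (w : seq Sigma)
  : {set Q} :=
  match w with
  | [::] => [set p]
  | a :: w' => \bigcup_(q in nfa_delta A p a) delta_star A q w'
  end.

Definition reach (Sigma Q : finType) (A : nfa Sigma Q) (p q : Q) : Prop :=
  exists w : seq Sigma, q \in delta_star A p w.

(* the reachability relation is a partial order (reflexivity and
   transitivity hold automatically; we state all three) *)
Definition poNFA (Sigma Q : finType) (A : nfa Sigma Q) : Prop :=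
  (forall p, reach A p p) /\
  (forall p q r, reach A p q -> reach A q r -> reach A p r) /\
  (forall p q, reach A p q -> reach A q p -> p = q).

Definition rpoNFA (Sigma Q : finType) (A : nfa Sigma Q) : Prop :=
  poNFA A /\
  (forall (q : Q) (a : Sigma), q \in nfa_delta A q a -> nfa_delta A q a = [set q]).

Definition nfa_lang (Sigma Q : finType) (A : nfa Sigma Q) (w : seq Sigma) : Prop :=
  exists2 i, i \in nfa_init A & [exists q in delta_star A i w, q \in nfa_final A].

Inductive regex (T : Type) :=
| RE_Empty
| RE_Eps
| RE_Sym of T
| RE_Cat of regex T & regex T
| RE_Plus of regex T & regex T
| RE_Star of regex T.

Arguments RE_Empty {T}.
Arguments RE_Eps {T}.

Fixpoint re_lang (T : Type) (r : regex T) (w : seq T) : Prop :=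
  match r with
  | RE_Empty => False
  | RE_Eps => w = [::]
  | RE_Sym a => w = [:: a]
  | RE_Cat r1 r2 => exists u v, w = u ++ v /\ re_lang r1 u /\ re_lang r2 v
  | RE_Plus r1 r2 => re_lang r1 w \/ re_lang r2 w
  | RE_Star r1 => exists ws : seq (seq T),
                    w = flatten ws /\ List.Forall (re_lang r1) ws
  end.

(* Marking: the i-th occurrence (from the left, i >= 1) of each letter a
   is replaced by the marked letter (a, i). *)
Fixpoint mark_aux (T : eqType) (r : regex T) (c : T -> nat)
  : regex (T * nat) * (T -> nat) :=
  match r with
  | RE_Empty => (RE_Empty, c)
  | RE_Eps => (RE_Eps, c)
  | RE_Sym a => (RE_Sym (a, c a), fun b => if b == a then (c a).+1 else c b)
  | RE_Cat r1 r2 =>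
      let (m1, c1) := mark_aux r1 c in
      let (m2, c2) := mark_aux r2 c1 in (RE_Cat m1 m2, c2)
  | RE_Plus r1 r2 =>
      let (m1, c1) := mark_aux r1 c in
      let (m2, c2) := mark_aux r2 c1 in (RE_Plus m1 m2, c2)
  | RE_Star r1 =>
      let (m1, c1) := mark_aux r1 c in (RE_Star m1, c1)
  end.

Definition mark (T : eqType) (r : regex T) : regex (T * nat) :=
  (mark_aux r (fun _ => 1)).1.

Definition deterministic (T : eqType) (r : regex T) : Prop :=
  ~ exists (w v v' : seq (T * nat)) (a : T) (i j : nat),
      i <> j /\ re_lang (mark r) (w ++ (a, i) :: v)
             /\ re_lang (mark r) (w ++ (a, j) :: v').

Definition DRE_definable (T : eqType) (L : seq T -> Prop) : Prop :=
  exists r : regex T, deterministic r /\ forall w, re_lang r w <-> L w.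

(* Main.v *)
Require Import Defs.
From mathcomp Require Import all_boot zify.
From Stdlib Require Import ClassicalEpsilon.
Set Implicit Arguments. Unset Strict Implicit. Unset Printing Implicit Defensive.

Section Generic.
Variable T : eqType.
Implicit Types (r : regex T) (c : T -> nat).

Lemma mark_cat r1 r2 c : mark_aux (RE_Cat r1 r2) c =
  (RE_Cat (mark_aux r1 c).1 (mark_aux r2 (mark_aux r1 c).2).1,
   (mark_aux r2 (mark_aux r1 c).2).2).
Proof. by rewrite /=; case: (mark_aux r1 c) => m1 c1 /=; case: (mark_aux r2 c1). Qed.

Lemma mark_plus r1 r2 c : mark_aux (RE_Plus r1 r2) c =
  (RE_Plus (mark_aux r1 c).1 (mark_aux r2 (mark_aux r1 c).2).1,
   (mark_aux r2 (mark_aux r1 c).2).2).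
Proof. by rewrite /=; case: (mark_aux r1 c) => m1 c1 /=; case: (mark_aux r2 c1). Qed.

Lemma mark_star r c : mark_aux (RE_Star r) c =
  (RE_Star (mark_aux r c).1, (mark_aux r c).2).
Proof. by rewrite /=; case: (mark_aux r c). Qed.

Fixpoint sumsym (s : seq T) : regex T :=
  match s with [::] => RE_Empty | a :: s' => RE_Plus (RE_Sym a) (sumsym s') end.

Fixpoint branches (F : T -> regex T) (bs : seq T) : regex T :=
  match bs with [::] => RE_Empty
  | b :: bs' => RE_Plus (RE_Cat (RE_Sym b) (F b)) (branches F bs') end.

Definition detL (L : seq (T * nat) -> Prop) :=
  forall w v v' a i j, L (w ++ (a, i) :: v) -> L (w ++ (a, j) :: v') -> i = j.

Lemma mark_sumsym s c : uniq s -> exists g : T -> nat, forall w,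
  re_lang (mark_aux (sumsym s) c).1 w -> exists2 a, a \in s & w = [:: (a, g a)].
Proof.
elim: s c => [|a s IH] c; first by move=> _; exists (fun _ => 0) => w /= [].
case/andP => nas us.
change (sumsym (a :: s)) with (RE_Plus (RE_Sym a) (sumsym s)).
rewrite mark_plus.
have [g' Hg'] := IH (mark_aux (RE_Sym a) c).2 us.
exists (fun x => if x == a then c a else g' x) => w /= [->|/Hg' [a' Ha' ->]].
  by exists a; rewrite ?inE ?eqxx.
exists a'; first by rewrite inE Ha' orbT.
have : a' != a by apply: contraNneq nas => <-.
by move/negbTE => ->.
Qed.

Lemma mark_branches F bs c : uniq bs -> exists (g : T -> nat) (h : T -> regex (T * nat)),
  (forall b, b \in bs -> exists c', h b = (mark_aux (F b) c').1) /\
  forall w, re_lang (mark_aux (branches F bs) c).1 w ->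
    exists b t, [/\ b \in bs, w = (b, g b) :: t & re_lang (h b) t].
Proof.
elim: bs c => [|a s IH] c; first by move=> _; exists (fun _ => 0), (fun _ => RE_Empty); split => // w /= [].
case/andP => nas us.
change (branches F (a :: s)) with (RE_Plus (RE_Cat (RE_Sym a) (F a)) (branches F s)).
rewrite mark_plus mark_cat.
have [g' [h' [Hh' Hg']]] := IH (mark_aux (F a) (mark_aux (RE_Sym a) c).2).2 us.
exists (fun x => if x == a then c a else g' x).
exists (fun x => if x == a then (mark_aux (F a) (mark_aux (RE_Sym a) c).2).1 else h' x).
split.
  move=> b; rewrite inE; case: eqP => [-> _|_ /= /Hh' //]; by eexists.
move=> w /= [[u [t [-> [-> Ht]]]]|/Hg' [b [t [Hb -> Ht]]]].
  by exists a, t; rewrite inE eqxx.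
have : b != a by apply: contraNneq nas => <-.
move/negbTE => nb; exists b, t; by rewrite inE Hb orbT nb.
Qed.

Lemma star_all (P : pred (T * nat)) (m : regex (T * nat)) u :
  (forall w, re_lang m w -> exists2 x, P x & w = [:: x]) ->
  re_lang (RE_Star m) u -> all P u.
Proof.
move=> Hm [ws [-> Hws]]; elim: Hws => //= w ws' Hw _ IH.
have [x Px ->] := Hm _ Hw; by rewrite /= Px.
Qed.

Lemma split_eq (w v u t : seq (T * nat)) x :
  w ++ x :: v = u ++ t ->
  (exists v1, u = w ++ x :: v1) \/ (exists w1, w = u ++ w1 /\ t = w1 ++ x :: v).
Proof.
elim: w u => [|y w IH] [|z u] /=.
- by move=> <-; right; exists [::].
- by case=> -> ->; left; exists u.
- by move=> <-; right; exists (y :: w).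
- case=> -> /IH [[v1 ->]|[w1 [-> ->]]]; first by left; exists v1.
  by right; exists w1.
Qed.

Lemma split_uniq (P : pred (T * nat)) (u1 u2 r1 r2 : seq (T * nat)) x1 x2 :
  all P u1 -> all P u2 -> ~~ P x1 -> ~~ P x2 ->
  u1 ++ x1 :: r1 = u2 ++ x2 :: r2 -> [/\ u1 = u2, x1 = x2 & r1 = r2].
Proof.
elim: u1 u2 => [|y u1 IH] [|z u2] /=.
- by move=> _ _ _ _ [-> ->].
- by move=> _ /andP [Pz _] nP1 _ [Ex]; rewrite Ex Pz in nP1.
- by move=> /andP [Py _] _ _ nP2 [Ex]; rewrite -Ex Py in nP2.
- move=> /andP [_ a1] /andP [_ a2] n1 n2 [-> E].
  by have [-> -> ->] := IH _ a1 a2 n1 n2 E.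
Qed.


Lemma det_step s bs (fin : bool) F c :
  uniq s -> uniq bs -> (forall b, b \in bs -> b \notin s) ->
  (forall b c', b \in bs -> detL (re_lang (mark_aux (F b) c').1)) ->
  detL (re_lang (mark_aux (RE_Cat (RE_Star (sumsym s))
     (RE_Plus (if fin then RE_Eps else RE_Empty) (branches F bs))) c).1).
Proof.
move=> us ubs dis IH.
rewrite mark_cat mark_star mark_plus.
set c1 := (mark_aux (sumsym s) c).2.
have Heps : forall t, re_lang (mark_aux (if fin then RE_Eps else RE_Empty) c1).1 t -> t = [::].
  by case: fin => t /=.
set c2 := (mark_aux (if fin then RE_Eps else RE_Empty) c1).2.
have [g Hg] := mark_sumsym c us.
have [g' [h [Hh Hb]]] := mark_branches F c2 ubs.
pose P (x : T * nat) := (x.1 \in s) && (x.2 == g x.1).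
have HP : forall w, re_lang (mark_aux (sumsym s) c).1 w -> exists2 x, P x & w = [:: x].
  move=> w /Hg [a Ha ->]; exists (a, g a) => //; by rewrite /P /= Ha eqxx.
have nP : forall b k, b \in bs -> ~~ P (b, k).
  by move=> b k /dis nb; rewrite /P /= (negbTE nb).
have cls : forall w a i v,
   re_lang (RE_Cat (RE_Star (mark_aux (sumsym s) c).1)
     (RE_Plus (mark_aux (if fin then RE_Eps else RE_Empty) c1).1
        (mark_aux (branches F bs) c2).1)) (w ++ (a, i) :: v) ->
   [\/ [/\ all P w, a \in s & i = g a], [/\ all P w, a \in bs & i = g' a] |
       exists u1 b w1, [/\ all P u1, b \in bs, w = u1 ++ (b, g' b) :: w1 &
                           re_lang (h b) (w1 ++ (a, i) :: v)]].
  move=> w a i v /= [u [t [E [Hu Ht]]]].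
  have Au := star_all HP Hu.
  case: (split_eq E) => [[v1 Eu]|[w1 [Ew Et]]].
    move: Au; rewrite Eu all_cat /= => /and3P [Aw /andP [Ha /eqP Hi] _].
    by apply: Or31.
  case: Ht => [/Heps|/Hb [b [t' [Hbb Et' Ht']]]]; first by move=> Et0; move: Et; rewrite Et0; case: w1 Ew.
  rewrite Et in Et'; clear Et; case: w1 Ew Et' => [|y w1] Ew /= [Ey Et'].
    rewrite cats0 in Ew; subst w; case: Ey => -> ->.
    by apply: Or32.
  apply: Or33; exists u, b, w1; split => //; first by rewrite Ew Ey.
  by rewrite Et'.
move=> w v v' a i j H1 H2.
have allP_neg : forall u1 b w1, b \in bs -> ~~ all P (u1 ++ (b, g' b) :: w1).
  by move=> u1 b w1 Hb'; rewrite all_cat /= (negbTE (nP _ _ Hb')) andbF.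
case: (cls _ _ _ _ H1) => [[Aw Ha ->]|[Aw Ha ->]|[u1 [b [w1 [Au1 Hb1 Ew Hr1]]]]];
case: (cls _ _ _ _ H2) => [[Aw' Ha' ->]|[Aw' Ha' ->]|[u2 [b2 [w2 [Au2 Hb2 Ew' Hr2]]]]] => //.
- by move: (dis _ Ha'); rewrite Ha.
- by move: Aw; rewrite Ew' (negbTE (allP_neg _ _ _ Hb2)).
- by move: (dis _ Ha); rewrite Ha'.
- by move: Aw; rewrite Ew' (negbTE (allP_neg _ _ _ Hb2)).
- by move: Aw'; rewrite Ew (negbTE (allP_neg _ _ _ Hb1)).
- by move: Aw'; rewrite Ew (negbTE (allP_neg _ _ _ Hb1)).
- rewrite Ew in Ew'.
  have [_ [Eb _] Ew12] := split_uniq Au1 Au2 (nP _ _ Hb1) (nP _ _ Hb2) Ew'.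
  subst b2 w2.
  have [c' Hc'] := Hh _ Hb1.
  rewrite Hc' in Hr1 Hr2.
  exact: (IH b c' Hb1 _ _ _ _ _ _ Hr1 Hr2).
Qed.


Lemma sumsym_lang s w : re_lang (sumsym s) w <-> exists2 a, a \in s & w = [:: a].
Proof.
elim: s w => [|a s IH] w /=; first by split => // [[]].
split => [[->|/IH [b bs ->]]|[b]].
- by exists a; rewrite ?inE ?eqxx.
- by exists b; rewrite ?inE ?bs ?orbT.
- rewrite inE => /orP [/eqP ->|bs] ->; [by left | right; apply/IH; by exists b].
Qed.

Lemma star_sum_lang s u : re_lang (RE_Star (sumsym s)) u <-> all (mem s) u.
Proof.
split.
  move=> [ws [-> H]]; elim: H => //= w ws' Hw _ IH.
  by case/sumsym_lang: Hw => a Ha ->; rewrite /= Ha IH.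
move=> Hu; exists (map (fun x => [:: x]) u); split.
  by elim: u {Hu} => //= x u {1}->.
elim: u Hu => //= x u IH /andP [xs us]; constructor; last exact: IH.
by apply/sumsym_lang; exists x.
Qed.

Lemma branches_lang F bs w : re_lang (branches F bs) w <->
  exists b t, [/\ b \in bs, w = b :: t & re_lang (F b) t].
Proof.
elim: bs w => [|a bs IH] w /=; first by split => // [[b [t []]]].
split.
  case=> [[u [t [-> [-> Ht]]]]|/IH [b [t [Hb -> Ht]]]].
    by exists a, t; rewrite inE eqxx.
  by exists b, t; rewrite inE Hb orbT.
case=> b [t [Hb -> Ht]]; rewrite inE in Hb; case/orP: Hb => [/eqP Eb|Hb].
  by subst b; left; exists [:: a], t.
by right; apply/IH; exists b, t.
Qed.

End Generic.

Section Auto.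
Variables (Sigma Q : finType) (A : nfa Sigma Q).

Definition Xstep (X : {set Q}) (a : Sigma) : {set Q} := \bigcup_(p in X) nfa_delta A p a.

Definition reachb p q : bool := if excluded_middle_informative (reach A p q) then true else false.
Lemma reachbP p q : reflect (reach A p q) (reachb p q).
Proof. by rewrite /reachb; case: excluded_middle_informative => H; constructor. Qed.

Definition ht q := #|[set p | reachb p q]|.

Lemma ht_lt : poNFA A -> forall p q, reach A p q -> p != q -> ht p < ht q.
Proof.
move=> [refl [trans anti]] p q Hpq npq; apply: proper_card; apply/properP; split.
  apply/subsetP => x; rewrite !inE => /reachbP H; apply/reachbP; exact: trans Hpq.
exists q; rewrite !inE; first by apply/reachbP.
apply/reachbP => Hqp; by rewrite (anti _ _ Hpq Hqp) eqxx in npq.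
Qed.

Lemma reach1 p a q : q \in nfa_delta A p a -> reach A p q.
Proof. move=> H; exists [:: a] => /=; apply/bigcupP; exists q => //; by rewrite inE. Qed.

Definition K := #|Q|.
Definition mu (X : {set Q}) := \sum_(x in X) K.+1 ^ (K - ht x).

Lemma mu_step : rpoNFA A -> forall X a, Xstep X a != X -> mu (Xstep X a) < mu X.
Proof.
move=> [po rl] X a neq; set Y := Xstep X a.
have nloop_lt : forall q y, q \notin nfa_delta A q a -> y \in nfa_delta A q a -> ht q < ht y.
  move=> q y nl Hy; apply: ht_lt => //; first exact: reach1 Hy.
  by apply: contraNneq nl => E; rewrite {1}E.
have L1 : forall n q, ht q < n -> q \in X -> q \notin nfa_delta A q a ->
    exists2 r, r \in X :\: Y & ht r <= ht q.
  elim => [q|n IH q Hn qX nl]; first by rewrite ltn0.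
  have [qY|qnY] := boolP (q \in Y); last by exists q => //; rewrite inE qnY qX.
  case/bigcupP: qY => p pX qp.
  have [lp|nlp] := boolP (p \in nfa_delta A p a).
    by move: qp nl; rewrite (rl _ _ lp) inE => /eqP ->; rewrite (rl _ _ lp) inE eqxx.
  have hpq := nloop_lt _ _ nlp qp.
  have [r Hr hr] := IH p (leq_trans hpq (Hn : ht q < n.+1)) pX nlp.
  exists r => //; exact: leq_trans hr (ltnW hpq).
have Ly : forall y, y \in Y -> y \notin X -> exists2 r, r \in X :\: Y & ht r < ht y.
  move=> y /bigcupP [q qX yq] ynX.
  have [lq|nlq] := boolP (q \in nfa_delta A q a).
    by move: yq; rewrite (rl _ _ lq) inE => /eqP Eyq; rewrite Eyq qX in ynX.
  have [r Hr hr] := L1 (ht q).+1 q (ltnSn _) qX nlq.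
  exists r => //; exact: leq_ltn_trans hr (nloop_lt _ _ nlq yq).
have [x0 Hx0] : exists x0, x0 \in X :\: Y.
  have [sub|] := boolP (X \subset Y).
    have : ~~ (Y \subset X).
      by apply: contra neq => sub'; rewrite eqEsubset sub'.
    case/subsetPn => y yY ynX; have [r Hr _] := Ly y yY ynX; by exists r.
  by case/subsetPn => x xX xnY; exists x; rewrite inE xnY xX.
pose D := X :\: Y.
case: (@arg_minnP _ x0 (mem D) ht Hx0) => m mD minm.
have hy : forall y, y \in Y :\: X -> ht m < ht y.
  move=> y; rewrite inE => /andP [ynX yY].
  have [r Hr hr] := Ly y yY ynX; exact: leq_ltn_trans (minm _ Hr) hr.
rewrite /mu [Z in Z < _](big_setID X) [Z in _ < Z](big_setID Y) /= setIC.
rewrite ltn_add2l.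
have lowX : K.+1 ^ (K - ht m) <= \sum_(i in X :\: Y) K.+1 ^ (K - ht i).
  by rewrite (bigD1 m) //= leq_addr.
apply: leq_trans lowX.
have [E0|[y0 Hy0]] := set_0Vmem (Y :\: X).
  by rewrite E0 big_set0 expn_gt0.
have hK : ht y0 <= K by apply: max_card.
have hm := hy _ Hy0.
have eqe : K.+1 ^ (K - ht m) = K.+1 ^ (K - ht m - 1) * K.+1.
  by rewrite -expnSr; congr (_ ^ _); lia.
rewrite eqe.
apply: (@leq_ltn_trans (\sum_(i in Y :\: X) K.+1 ^ (K - ht m - 1))).
  apply: leq_sum => y Hy; apply: leq_pexp2l => //.
  have := hy _ Hy; lia.
rewrite sum_nat_const.
rewrite mulnC ltn_mul2l expn_gt0 /= ltnS; exact: max_card.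
Qed.

Definition Xdelta X (w : seq Sigma) := foldl Xstep X w.
Definition finb (X : {set Q}) := [exists q in X, q \in nfa_final A].

Lemma Xdelta_spec w X x : (x \in Xdelta X w) = [exists p in X, x \in delta_star A p w].
Proof.
elim: w X => [|a w IH] X /=.
  apply/idP/existsP => [xX|[p /andP [pX]]]; first by exists x; rewrite xX inE eqxx.
  by rewrite inE => /eqP ->.
rewrite IH; apply/existsP/existsP => [[q /andP [/bigcupP [p pX qp] xq]]|[p /andP [pX /bigcupP [q qp xq]]]].
  exists p; rewrite pX /=; apply/bigcupP; by exists q.
exists q; rewrite xq andbT; apply/bigcupP; by exists p.
Qed.

Lemma nfa_lang_acc w : nfa_lang A w <-> finb (Xdelta (nfa_init A) w).
Proof.
split.
  case=> i iI /existsP [q /andP [qd qf]]; apply/existsP; exists q.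
  rewrite qf andbT Xdelta_spec; apply/existsP; exists i; by rewrite iI.
case/existsP => q /andP [qd qf]; move: qd; rewrite Xdelta_spec => /existsP [i /andP [iI qd]].
exists i => //; apply/existsP; exists q; by rewrite qd.
Qed.

Definition Sfix X := [seq a <- enum Sigma | Xstep X a == X].
Definition NSfix X := [seq a <- enum Sigma | Xstep X a != X].

Fixpoint E (n : nat) (X : {set Q}) : regex Sigma :=
  match n with
  | 0 => RE_Empty
  | n'.+1 => RE_Cat (RE_Star (sumsym (Sfix X)))
      (RE_Plus (if finb X then RE_Eps else RE_Empty)
               (branches (fun b => E n' (Xstep X b)) (NSfix X)))
  end.

Lemma E_det n X c : detL (re_lang (mark_aux (E n X) c).1).
Proof.
elim: n X c => [|n IH] X c; first by move=> w v v' a i j /= [].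
apply: (@det_step _ (Sfix X) (NSfix X) (finb X) (fun b => E n (Xstep X b))).
- exact: filter_uniq (enum_uniq _).
- exact: filter_uniq (enum_uniq _).
- by move=> b; rewrite !mem_filter => /andP [nb _]; rewrite negb_and nb.
- by move=> b c' _; exact: IH.
Qed.

Lemma E_lang : rpoNFA A -> forall n X w, mu X < n -> re_lang (E n X) w <-> finb (Xdelta X w).
Proof.
move=> rpo; elim => [|n IH] X w; first by rewrite ltn0.
move=> Hmu.
have Hs : forall b, b \in NSfix X -> mu (Xstep X b) < n.
  move=> b; rewrite mem_filter => /andP [nb _].
  exact: leq_trans (mu_step rpo nb) Hmu.
have fixd : forall u, all (mem (Sfix X)) u -> Xdelta X u = X.
  elim=> //= a u IHu /andP [].
  rewrite /= mem_filter => /andP [/eqP -> _]; exact: IHu.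
split.
  move=> [u [t [-> [Hu Ht]]]].
  rewrite /Xdelta foldl_cat -/(Xdelta X u) (fixd u (proj1 (star_sum_lang _ _) Hu)).
  case: Ht => [|/branches_lang [b [t' [Hb -> Ht']]]].
    by case: ifP => //= fX ->.
  by apply/(IH _ _ (Hs _ Hb)).
elim: w => [|a w IHw] H.
  exists [::], [::]; split => //; split; first by apply/star_sum_lang.
  by left; move: H => /= ->.
have [aS|naS] := boolP (a \in Sfix X).
  have Ea : Xstep X a = X by move: aS; rewrite mem_filter => /andP [/eqP].
  move: H; rewrite /Xdelta /= Ea => /IHw [u [t [Ew [Hu Ht]]]].
  exists (a :: u), t; split; first by rewrite Ew.
  split => //; apply/star_sum_lang; rewrite /= aS /=; exact/star_sum_lang.
have aN : a \in NSfix X by rewrite mem_filter mem_enum andbT; move: naS; rewrite mem_filter mem_enum andbT.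
exists [::], (a :: w); split => //; split; first by apply/star_sum_lang.
right; apply/branches_lang; exists a, w; split => //.
by apply/(IH _ _ (Hs _ aN)).
Qed.

End Auto.

Theorem theorem12 (Sigma Q : finType) (A : nfa Sigma Q) :
  rpoNFA A -> DRE_definable (nfa_lang A).
Proof.
move=> rpo; exists (E A (mu A (nfa_init A)).+1 (nfa_init A)); split.
  move=> [w [v [v' [a [i [j [nij [H1 H2]]]]]]]].
  by apply: nij; exact: (@E_det _ _ A _ _ (fun _ => 1) w v v' a i j H1 H2).
move=> w; rewrite nfa_lang_acc; exact: E_lang.
Qed.
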